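(* Let $\mathcal{S}$ be a relational schema, $\mathit{IC}$ a finite set of universal integrity constraints of the form $\forall \bar{x}(\bigwedge_{i=1}^{m} P_i(\bar{x}_i) \rightarrow \bigvee_{j=1}^{n} Q_j(\bar{y}_j) \vee \varphi)$, and $D$ a database instance (without nulls). Then the second-order sentence $\Phi(\Pi(\mathit{IC},D))$ associated to the repair program is logically equivalent to $$\mathcal{R}(D) \wedge \bigwedge_{P\in\mathcal{S}}\forall\bar x\big((P(\bar x)\vee P_{\mathbf{t}}(\bar x))\equiv P_\star(\bar x)\big)\wedge\bigwedge_{P\in\mathcal{S}}\forall\bar x\big((P_\star(\bar x)\wedge\neg P_{\mathbf{f}}(\bar x))\equiv P_{\star\star}(\bar x)\big)\wedge\bigwedge_{P\in\mathcal{S}}\forall\bar x\,\neg(P_{\mathbf{t}}(\bar x)\wedge P_{\mathbf{f}}(\bar x))\wedge \mathit{Circ}\big(\Theta;\{P_{\mathbf{t}},P_{\mathbf{f}}\mid P\in\mathcal{S}\};\{P_\star\mid P\in\mathcal{S}\}\big),$$ where $\Theta$ is the conjunction of the rules of types (1)–(3) of the repair program, each viewed as a first-order sentence, and $\mathit{Circ}$ denotes parallel circumscription.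
   Context: Repair program $\Pi(\mathit{IC},D)$: for each $P\in\mathcal{S}$ of arity $k$ there are new $k$-ary predicates $P_{\mathbf{t}}, P_{\mathbf{f}}, P_{\star}, P_{\star\star}$. Rules: (1) a fact $P(\bar a)$ for each $P(\bar a)\in D$; (2) for each constraint and each partition $Q'\cup Q''=\{Q_1,\ldots,Q_n\}$, $Q'\cap Q''=\emptyset$, the rule $\bigvee_{i=1}^m P_{i,\mathbf{f}}(\bar{x}_i)\vee\bigvee_{j=1}^n Q_{j,\mathbf{t}}(\bar y_j)\leftarrow \bigwedge_{i=1}^m P_{i,\star}(\bar x_i), \bigwedge_{Q_j\in Q'}Q_{j,\mathbf{f}}(\bar y_j), \bigwedge_{Q_k\in Q''}\mathit{not}\,Q_k(\bar y_k), \bar\varphi$, with $\bar\varphi$ a conjunction of built-ins equivalent to $\neg\varphi$; (3) $P_\star(\bar x)\leftarrow P(\bar x)$ and $P_\star(\bar x)\leftarrow P_{\mathbf{t}}(\bar x)$; (4) $P_{\star\star}(\bar x)\leftarrow P_\star(\bar x),\mathit{not}\,P_{\mathbf{f}}(\bar x)$; (5) program constraint $\leftarrow P_{\mathbf{t}}(\bar x),P_{\mathbf{f}}(\bar x)$. A rule is viewed as a first-order sentence by replacing commas with $\wedge$, $\mathit{not}$ with $\neg$, turning $\mathit{Head}\leftarrow\mathit{Body}$ into $\mathit{Body}\rightarrow\mathit{Head}$ and taking the universal closure; a constraint $\leftarrow B$ becomes $\neg B$. For a program $\Pi$, $\psi(\Pi)$ is the conjunction of these sentences. The SO sentence is $\Phi(\Pi):=\psi\wedge\neg\exists\bar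 X((\bar X<\bar P)\wedge\psi^\circ(\bar X))$, where $\bar P=(P_1,\ldots,P_n)$ lists the (non-built-in) predicates of $\psi$, $\bar X=(X^{P_1},\ldots,X^{P_n})$ are predicate variables of matching arities, $\bar X<\bar P$ means $\bigwedge_i\forall\bar x(X^{P_i}(\bar x)\rightarrow P_i(\bar x))\wedge\bigvee_i\exists\bar x(P_i(\bar x)\wedge\neg X^{P_i}(\bar x))$, and $\psi^\circ$ is defined recursively (with $\neg\chi$ written as $\chi\rightarrow\bot$): $P_i(\bar t)^\circ=X^{P_i}(\bar t)$; $(t_1=t_2)^\circ=(t_1=t_2)$ (built-ins unchanged); $\bot^\circ=\bot$; $(F\odot G)^\circ=F^\circ\odot G^\circ$ for $\odot\in\{\wedge,\vee\}$; $(F\rightarrow G)^\circ=(F^\circ\rightarrow G^\circ)\wedge(F\rightarrow G)$; $(\mathsf{Q}xF)^\circ=\mathsf{Q}xF^\circ$ for $\mathsf{Q}\in\{\forall,\exists\}$. The Herbrand models of $\Phi(\Pi)$ are the stable models of $\Pi$. $\mathcal{R}(D)$ (Reiter's reconstruction) is the conjunction of: the domain closure axiom $\forall x\bigvee_{c}x=c$ over the (active) domain constants; the unique names axioms $c\neq c'$ for distinct constants; and for each $P\in\mathcal{S}$ the completion $\forall\bar x(P(\bar x)\equiv\bigvee_{P(\bar a)\in D}\bar x=\bar a)$ (with empty disjunction $\bot$). Parallel circumscription: $\mathit{Circ}(\Sigma(\bar P,\bar Q);\bar P;\bar Q):=\Sigma(\bar P,\bar Q)\wedge\neg\exists\bar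 X\bar Y(\Sigma(\bar X,\bar Y)\wedge\bar X\le\bar P\wedge\bar X\neq\bar P)$, where $\bar X\le\bar P$ means $\bigwedge_i\forall\bar x(X_i(\bar x)\rightarrow P_i(\bar x))$; the predicates in $\bar Q$ vary, all others are fixed. *)

(* Defs.v *)
From HB Require Import structures.
From mathcomp Require Import all_boot.
Set Implicit Arguments. Unset Strict Implicit. Unset Printing Implicit Defensive.

Inductive term (C : Type) := TVar of nat | TCst of C.
Arguments TVar {C} _.
Arguments TCst {C} _.

Record builtin (C : Type) := Builtin { b_rel : seq C -> Prop; b_args : seq (term C) }.

Section Formulas.
Variables (C : Type) (S : Type) (sar : S -> nat).

Record atom := Atom { a_sym : S; a_args : (sar a_sym).-tuple (term C) }.

Inductive form :=
| FAtom of atom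
| FBi of builtin C
| FBot
| FAnd of form & form
| FOr of form & form
| FImp of form & form
| FAll of nat & form
| FEx of nat & form.

Definition FNot (f : form) := FImp f FBot.
Definition FTop := FImp FBot FBot.

Fixpoint bigAnd (fs : seq form) : form :=
  match fs with [::] => FTop | [:: f] => f | f :: fs' => FAnd f (bigAnd fs') end.
Fixpoint bigOr (fs : seq form) : form :=
  match fs with [::] => FBot | [:: f] => f | f :: fs' => FOr f (bigOr fs') end.

Definition tvars (t : term C) : seq nat := if t is TVar n then [:: n] else [::].

Fixpoint fv (f : form) : seq nat :=
  match f with
  | FAtom a => flatten (map tvars (a_args a))
  | FBi b => flatten (map tvars (b_args b))
  | FBot => [::]
  | FAnd f g | FOr f g | FImp f g => fv f ++ fv g
  | FAll n f | FEx n f => [seq m <- fv f | m != n]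
  end.

Definition uclose (f : form) : form := foldr FAll f (undup (fv f)).

(* interpretations of the signature over the (Herbrand) universe C *)
Definition interp := forall s : S, (sar s).-tuple C -> Prop.

Definition teval (nu : nat -> C) (t : term C) : C :=
  match t with TVar n => nu n | TCst c => c end.

Definition upd (nu : nat -> C) (n : nat) (c : C) : nat -> C :=
  fun m => if m == n then c else nu m.

Fixpoint eval (I : interp) (nu : nat -> C) (f : form) : Prop :=
  match f with
  | FAtom a => I (a_sym a) (map_tuple (teval nu) (a_args a))
  | FBi b => b_rel b (map (teval nu) (b_args b))
  | FBot => False
  | FAnd f g => eval I nu f /\ eval I nu g
  | FOr f g => eval I nu f \/ eval I nu g
  | FImp f g => eval I nu f -> eval I nu g
  | FAll n f => forall c, eval I (upd nu n c) f
  | FEx n f => exists c, eval I (upd nu n c) f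
  end.

Definition holds (I : interp) (f : form) : Prop := forall nu, eval I nu f.

End Formulas.

(* (inl s) is the original predicate s, (inr s) is the predicate var X^s.  *)
Section Circ.
Variables (C : Type) (S : Type) (sar : S -> nat).

Definition sar2 (s : S + S) : nat := match s with inl s | inr s => sar s end.

Fixpoint liftL (f : form C sar) : form C sar2 :=
  match f with
  | FAtom a => FAtom (@Atom C _ sar2 (inl (a_sym a)) (a_args a))
  | FBi b => FBi _ b
  | FBot => FBot _ _
  | FAnd f g => FAnd (liftL f) (liftL g)
  | FOr f g => FOr (liftL f) (liftL g)
  | FImp f g => FImp (liftL f) (liftL g)
  | FAll n f => FAll n (liftL f)
  | FEx n f => FEx n (liftL f)
  end.

Fixpoint circ (f : form C sar) : form C sar2 :=
  match f with
  | FAtom a => FAtom (@Atom C _ sar2 (inr (a_sym a)) (a_args a))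
  | FBi b => FBi _ b
  | FBot => FBot _ _
  | FAnd f g => FAnd (circ f) (circ g)
  | FOr f g => FOr (circ f) (circ g)
  | FImp f g => FAnd (FImp (circ f) (circ g)) (FImp (liftL f) (liftL g))
  | FAll n f => FAll n (circ f)
  | FEx n f => FEx n (circ f)
  end.

Definition pair_interp (I X : interp C sar) : interp C sar2 :=
  fun s => match s as s0 return (sar2 s0).-tuple C -> Prop with
           | inl s => I s | inr s => X s end.

Definition SOlt (X P : interp C sar) : Prop :=
  (forall s x, X s x -> P s x) /\ (exists s x, P s x /\ ~ X s x).

Definition PhiSO (psi : form C sar) (I : interp C sar) : Prop :=
  holds I psi /\ ~ exists X : interp C sar, SOlt X I /\ holds (pair_interp I X) (circ psi).

Definition CircP (Sigma : interp C sar -> Prop) (mini vary : S -> bool)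
    (I : interp C sar) : Prop :=
  Sigma I /\
  ~ exists X Y : interp C sar,
      Sigma (fun s => if mini s then X s else if vary s then Y s else I s)
      /\ (forall s, mini s -> forall x, X s x -> I s x)
      /\ ~ (forall s, mini s -> forall x, X s x <-> I s x).

End Circ.

(* kinds of program predicates: P, P_t, P_f, P_star, P_starstar *)
Inductive kind := KBase | Kt | Kf | Kst | Kss.

Section Repair.
Variables (Const : finType) (Pred : finType) (ar : Pred -> nat).

Definition psym := (Pred * kind)%type.
Definition par (p : psym) : nat := ar p.1.

Definition patom := atom Const par.
Definition pform := form Const par.
Definition pinterp := interp Const par.

Definition satom := {P : Pred & (ar P).-tuple (term Const)}.

(* A universal integrity constraint
     forall x (/\_i P_i(x_i) -> \/_j Q_j(y_j) \/ phi)
   given by its body atoms, its head atoms, and phibar: a conjunction of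
   built-ins equivalent to ~ phi (so phi is ~ /\ phibar). *)
Record ic := IC { ic_body : seq satom; ic_head : seq satom; ic_phibar : seq (builtin Const) }.

Definition instance := forall P : Pred, seq ((ar P).-tuple Const).

Definition mkA (k : kind) (a : satom) : patom :=
  @Atom Const psym par (projT1 a, k) (projT2 a).

Inductive lit := LPos of patom | LNeg of patom | LBi of builtin Const.

Definition lit_form (l : lit) : pform :=
  match l with
  | LPos a => FAtom a
  | LNeg a => FNot (FAtom a)
  | LBi b => FBi _ b
  end.

Inductive rule :=
| RFact of patom
| RRule of seq patom & seq lit
| RConstr of seq lit.

Definition rule_form (r : rule) : pform :=
  match r with
  | RFact a => uclose (FAtom a)
  | RRule h b => uclose (FImp (bigAnd (map lit_form b)) (bigOr (map (@FAtom _ _ _) h)))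
  | RConstr b => uclose (FNot (bigAnd (map lit_form b)))
  end.

Definition program_form (Pi : seq rule) : pform := bigAnd (map rule_form Pi).

(* all 0/1 masks of length n: true = in Q', false = in Q'' *)
Fixpoint masks (n : nat) : seq (seq bool) :=
  if n is n'.+1 then [seq b :: m | b <- [:: true; false], m <- masks n'] else [:: [::]].

Definition rules1 (D : instance) : seq rule :=
  flatten [seq [seq RFact (@Atom Const psym par (P, KBase) (map_tuple TCst a)) | a <- D P]
          | P <- enum Pred].

Definition rule2 (c : ic) (m : seq bool) : rule :=
  let QQ := zip (ic_head c) m in
  RRule ([seq mkA Kf a | a <- ic_body c] ++ [seq mkA Kt q | q <- ic_head c])
        ([seq LPos (mkA Kst a) | a <- ic_body c]
         ++ [seq LPos (mkA Kf qb.1) | qb <- QQ & qb.2]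
         ++ [seq LNeg (mkA KBase qb.1) | qb <- QQ & ~~ qb.2]
         ++ [seq LBi b | b <- ic_phibar c]).

Definition rules2 (IC : seq ic) : seq rule :=
  flatten [seq [seq rule2 c m | m <- masks (size (ic_head c))] | c <- IC].

Definition xvars (P : Pred) : (ar P).-tuple (term Const) := [tuple TVar i | i < ar P].
Definition xA (P : Pred) (k : kind) : patom := @Atom Const psym par (P, k) (xvars P).

Definition rules3 : seq rule :=
  flatten [seq [:: RRule [:: xA P Kst] [:: LPos (xA P KBase)];
                   RRule [:: xA P Kst] [:: LPos (xA P Kt)]] | P <- enum Pred].
Definition rules4 : seq rule :=
  [seq RRule [:: xA P Kss] [:: LPos (xA P Kst); LNeg (xA P Kf)] | P <- enum Pred].
Definition rules5 : seq rule :=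
  [seq RConstr [:: LPos (xA P Kt); LPos (xA P Kf)] | P <- enum Pred].

Definition repair_program (IC : seq ic) (D : instance) : seq rule :=
  rules1 D ++ rules2 IC ++ rules3 ++ rules4 ++ rules5.

Definition Theta (IC : seq ic) (D : instance) : pform :=
  program_form (rules1 D ++ rules2 IC ++ rules3).

(* Reiter's reconstruction R(D), in a Herbrand structure over Const
   (constants are interpreted by themselves) *)
Definition DCA : Prop := forall x : Const, exists c : Const, x = c.
Definition UNA : Prop := forall c c' : Const, c != c' -> c <> c'.
Definition Completion (D : instance) (I : pinterp) : Prop :=
  forall (P : Pred) (x : (ar P).-tuple Const),
    I (P, KBase) x <-> exists2 a, a \in D P & x = a.
Definition Reiter (D : instance) (I : pinterp) : Prop :=
  DCA /\ UNA /\ Completion D I.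

Definition is_min (p : psym) : bool := match p.2 with Kt | Kf => true | _ => false end.
Definition is_var (p : psym) : bool := match p.2 with Kst => true | _ => false end.

Definition circ_charac (IC : seq ic) (D : instance) (I : pinterp) : Prop :=
  Reiter D I
  /\ (forall (P : Pred) (x : (ar P).-tuple Const),
        (I (P, KBase) x \/ I (P, Kt) x) <-> I (P, Kst) x)
  /\ (forall (P : Pred) (x : (ar P).-tuple Const),
        (I (P, Kst) x /\ ~ I (P, Kf) x) <-> I (P, Kss) x)
  /\ (forall (P : Pred) (x : (ar P).-tuple Const), ~ (I (P, Kt) x /\ I (P, Kf) x))
  /\ CircP (fun J => holds J (Theta IC D)) is_min is_var I.

End Repair.

(* Main.v *)
Require Import Defs.
From HB Require Import structures.
From mathcomp Require Import all_boot.
From Stdlib Require Import Classical FunctionalExtensionality.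
From Stdlib Require List.
Set Implicit Arguments. Unset Strict Implicit. Unset Printing Implicit Defensive.

Lemma In_map (A B : Type) (f : A -> B) (s : seq A) y :
  List.In y (map f s) <-> exists x, List.In x s /\ y = f x.
Proof.
elim: s => [|x s IH] /=; first by split => // [[x []]].
split.
- case=> [<-|/IH [z [Hz ->]]]; first by exists x; auto.
  by exists z; auto.
- case=> z [[<-|Hz] Ey]; first by left; rewrite Ey.
  right; apply/IH; by exists z.
Qed.

Lemma In_cat (A : Type) (s t : seq A) x :
  List.In x (s ++ t) <-> List.In x s \/ List.In x t.
Proof. elim: s => [|y s IH] /=; first by tauto. have := IH; tauto. Qed.

Lemma In_flatten (A : Type) (ss : seq (seq A)) x :
  List.In x (flatten ss) <-> exists s, List.In s ss /\ List.In x s.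
Proof.
elim: ss => [|s ss IH] /=; first by split => // [[s []]].
rewrite /flatten /= -/(flatten ss).
split.
- case/In_cat => H; first by exists s; auto.
  case/IH: H => t [Ht Hx]; exists t; auto.
- case=> t [[<-|Ht] Hx]; apply/In_cat; [left | right; apply/IH; exists t]; auto.
Qed.

Lemma In_mem (T : eqType) (x : T) s : List.In x s <-> x \in s.
Proof.
elim: s => [|y s IH] /=; first by rewrite in_nil.
rewrite in_cons; split.
- case=> [->|/IH ->]; by rewrite ?eqxx ?orbT.
- case/orP => [/eqP ->|/IH]; auto.
Qed.

Section Gen.
Variables (C S : Type) (sar : S -> nat).

Lemma upd_same (nu : nat -> C) n : upd nu n (nu n) = nu.
Proof. apply: functional_extensionality => m; rewrite /upd; by case: eqP => [->|]. Qed.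

Lemma eval_foldr_all (J : interp C sar) vs (f : form C sar) :
  (forall nu, eval J nu (foldr (@FAll C S sar) f vs)) <-> (forall nu, eval J nu f).
Proof.
elim: vs => [|n vs IH] //=.
split => H nu.
- apply: (proj1 IH _ nu) => nu'. have := H nu' (nu' n). by rewrite upd_same.
- move=> c; exact: (proj2 IH H).
Qed.

Lemma circ_foldr vs (f : form C sar) :
  circ (foldr (@FAll C S sar) f vs) = foldr (@FAll C (S + S) (sar2 sar)) (circ f) vs.
Proof. by elim: vs => //= n vs ->. Qed.

Lemma eval_liftL (I X : interp C sar) (f : form C sar) nu :
  eval (pair_interp I X) nu (liftL f) <-> eval I nu f.
Proof.
elim: f nu => //=.
- by move=> f IHf g IHg nu; rewrite /=; have := IHf nu; have := IHg nu; tauto.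
- by move=> f IHf g IHg nu; have := IHf nu; have := IHg nu; tauto.
- by move=> f IHf g IHg nu; have := IHf nu; have := IHg nu; tauto.
- move=> n f IH nu; split => H c; apply/IH; exact: H.
- move=> n f IH nu; split => -[c H]; exists c; apply/IH; exact: H.
Qed.

Lemma eval_bigAnd (J : interp C sar) nu (fs : seq (form C sar)) :
  eval J nu (bigAnd fs) <-> forall f, List.In f fs -> eval J nu f.
Proof.
elim: fs => [|f fs IH]; first by split => //= _ [].
have E : eval J nu (bigAnd (f :: fs)) <-> eval J nu f /\ eval J nu (bigAnd fs).
  by case: fs {IH} => [|g fs] //=; split => // -[].
rewrite /=; split.
- move/E => [Hf /IH Hs] g [<-|Hg] //; exact: Hs.
- move=> H; apply/E; split; first by apply: H; left.
  apply/IH => g Hg; apply: H; by right.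
Qed.

Lemma eval_circ_bigAnd (I X : interp C sar) nu (fs : seq (form C sar)) :
  eval (pair_interp I X) nu (circ (bigAnd fs)) <->
  forall f, List.In f fs -> eval (pair_interp I X) nu (circ f).
Proof.
elim: fs => [|f fs IH]; first by split => //= _ [].
have E : eval (pair_interp I X) nu (circ (bigAnd (f :: fs))) <->
   eval (pair_interp I X) nu (circ f) /\ eval (pair_interp I X) nu (circ (bigAnd fs)).
  by case: fs {IH} => [|g fs] //=; split => // -[].
rewrite /=; split.
- move/E => [Hf /IH Hs] g [<-|Hg] //; exact: Hs.
- move=> H; apply/E; split; first by apply: H; left.
  apply/IH => g Hg; apply: H; by right.
Qed.

Lemma eval_bigOr (J : interp C sar) nu (fs : seq (form C sar)) :
  eval J nu (bigOr fs) <-> exists f, List.In f fs /\ eval J nu f.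
Proof.
elim: fs => [|f fs IH]; first by split => //= -[f []] [].
have E : eval J nu (bigOr (f :: fs)) <-> eval J nu f \/ eval J nu (bigOr fs).
  by case: fs {IH} => [|g fs] //=; tauto.
split.
- case/E => [Hf|/IH [g [Hg Hg']]]; first by exists f; split => //; left.
  by exists g; split => //; right.
- case=> g [[<-|Hg] Hg']; apply/E; first by left.
  right; apply/IH; by exists g.
Qed.

Lemma circ_bigOr (fs : seq (form C sar)) : circ (bigOr fs) = bigOr (map (@circ C S sar) fs).
Proof.
elim: fs => [|f fs IH] //=.
by case: fs IH => [|g fs] //= ->.
Qed.

End Gen.

Section Rep.
Variables (Const Pred : finType) (ar : Pred -> nat).

Local Notation pI := (pinterp Const ar).
Local Notation lit := (lit Const ar).
Local Notation rule := (rule Const ar).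
Local Notation patom := (patom Const ar).
Local Notation xvars := (@xvars Const Pred ar).
Local Notation xA := (@xA Const Pred ar).
Local Notation rules3 := (@rules3 Const Pred ar).
Local Notation rules4 := (@rules4 Const Pred ar).
Local Notation rules5 := (@rules5 Const Pred ar).

Definition aval (J : pI) (nu : nat -> Const) (a : patom) : Prop :=
  J (a_sym a) (map_tuple (teval nu) (a_args a)).

Definition lit_sem (J : pI) nu (l : lit) : Prop :=
  match l with
  | LPos a => aval J nu a
  | LNeg a => ~ aval J nu a
  | LBi b => b_rel b (map (teval nu) (b_args b))
  end.

Definition lit_circ (I X : pI) nu (l : lit) : Prop :=
  match l with
  | LPos a => aval X nu a
  | LNeg a => ~ aval X nu a /\ ~ aval I nu a
  | LBi b => b_rel b (map (teval nu) (b_args b))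
  end.

Definition BodyS J nu (b : seq lit) := forall l, List.In l b -> lit_sem J nu l.
Definition BodyC I X nu (b : seq lit) := forall l, List.In l b -> lit_circ I X nu l.
Definition HeadS J nu (h : seq patom) := exists a, List.In a h /\ aval J nu a.

Definition rule_sem (J : pI) (r : rule) : Prop :=
  match r with
  | RFact a => forall nu, aval J nu a
  | RRule h b => forall nu, BodyS J nu b -> HeadS J nu h
  | RConstr b => forall nu, ~ BodyS J nu b
  end.

Definition rule_csem (I X : pI) (r : rule) : Prop :=
  match r with
  | RFact a => forall nu, aval X nu a
  | RRule h b => forall nu, (BodyC I X nu b -> HeadS X nu h) /\ (BodyS I nu b -> HeadS I nu h)
  | RConstr b => forall nu, ~ BodyC I X nu b /\ ~ BodyS I nu b
  end.

Lemma eval_body (J : pI) nu b :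
  eval J nu (bigAnd (map (@lit_form _ _ ar) b)) <-> BodyS J nu b.
Proof.
rewrite /BodyS; split.
- move/eval_bigAnd => H l Hl; have := H (lit_form l).
  case: l Hl => [a|a|c] Hl /= H'; apply: H'; apply/In_map.
  + by exists (LPos a).
  + by exists (LNeg a).
  + by exists (LBi ar c).
- move=> H; apply/eval_bigAnd => f /In_map [l [Hl ->]]; have := H l Hl.
  by case: l {Hl}.
Qed.

Lemma eval_cbody (I X : pI) nu b :
  eval (pair_interp I X) nu (circ (bigAnd (map (@lit_form _ _ ar) b))) <-> BodyC I X nu b.
Proof.
rewrite /BodyC; split.
- move/eval_circ_bigAnd => H l Hl; have := H (lit_form l).
  case: l Hl => [a|a|c] Hl /= H'.
  + apply: H'; apply/In_map; by exists (LPos a).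
  + have [H1 H2] : (aval X nu a -> False) /\ (aval I nu a -> False).
      apply: H'; apply/In_map; by exists (LNeg a).
    by split.
  + apply: H'; apply/In_map; by exists (LBi ar c).
- move=> H; apply/eval_circ_bigAnd => f /In_map [l [Hl ->]]; have := H l Hl.
  by case: l {Hl} => //= a [].
Qed.

Lemma eval_head (J : pI) nu h :
  eval J nu (bigOr (map (@FAtom _ _ _) h)) <-> HeadS J nu h.
Proof.
rewrite eval_bigOr /HeadS; split.
- case=> f [/In_map [a [Ha ->]] H]; by exists a.
- case=> a [Ha H]; exists (FAtom a); split => //; apply/In_map; by exists a.
Qed.

Lemma eval_chead (I X : pI) nu h :
  eval (pair_interp I X) nu (circ (bigOr (map (@FAtom _ _ _) h))) <-> HeadS X nu h.
Proof.
rewrite circ_bigOr eval_bigOr /HeadS; split.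
- case=> f [/In_map [g [/In_map [a [Ha ->]] ->]] H]; by exists a.
- case=> a [Ha H]; exists (circ (FAtom a)); split => //.
  apply/In_map; exists (FAtom a); split => //; apply/In_map; by exists a.
Qed.

Lemma holds_rule (J : pI) r : holds J (rule_form r) <-> rule_sem J r.
Proof.
case: r => [a|h b|b]; rewrite /holds /rule_form /uclose eval_foldr_all /=.
- by split.
- split => H nu.
  + move/eval_body => /(H nu) /eval_head; done.
  + move=> /eval_body /(H nu) /eval_head; done.
- split => H nu.
  + move/eval_body => /(H nu); done.
  + move=> /eval_body /(H nu); done.
Qed.

Lemma holds_crule (I X : pI) r :
  holds (pair_interp I X) (circ (rule_form r)) <-> rule_csem I X r.
Proof.
case: r => [a|h b|b]; rewrite /holds /rule_form /uclose circ_foldr eval_foldr_all /=.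
- by split.
- split => H nu; split.
  + move/eval_cbody => /(proj1 (H nu)) /eval_chead; done.
  + move=> /eval_body /eval_liftL /(proj2 (H nu)) /eval_liftL /eval_head; done.
  + move=> /eval_cbody /(proj1 (H nu)) /eval_chead; done.
  + move=> /eval_liftL /eval_body /(proj2 (H nu)) /eval_head /(eval_liftL I X); done.
- split => H nu; split.
  + move/eval_cbody => /(proj1 (H nu)); done.
  + move=> /eval_body /(eval_liftL I X) /(proj2 (H nu)); done.
  + move=> /eval_cbody /(proj1 (H nu)); done.
  + move=> /eval_liftL /eval_body /(proj2 (H nu)); done.
Qed.

Lemma holds_prog (J : pI) Pi :
  holds J (program_form Pi) <-> forall r, List.In r Pi -> rule_sem J r.
Proof.
split.
- move=> H r Hr; apply/holds_rule => nu; move/eval_bigAnd: (H nu); apply.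
  apply/In_map; by exists r.
- move=> H nu; apply/eval_bigAnd => f /In_map [r [Hr ->]].
  exact: (proj2 (holds_rule J r) (H r Hr)).
Qed.

Lemma holds_cprog (I X : pI) Pi :
  holds (pair_interp I X) (circ (program_form Pi)) <-> forall r, List.In r Pi -> rule_csem I X r.
Proof.
split.
- move=> H r Hr; apply/holds_crule => nu; move/eval_circ_bigAnd: (H nu); apply.
  apply/In_map; by exists r.
- move=> H nu; apply/eval_circ_bigAnd => f /In_map [r [Hr ->]].
  exact: (proj2 (holds_crule I X r) (H r Hr)).
Qed.

Lemma all_x (c0 : Const) P (Q : (ar P).-tuple Const -> Prop) :
  (forall nu, Q (map_tuple (teval nu) (xvars P))) <-> forall x, Q x.
Proof.
split => [H x|H nu]; last exact: H.
have -> : x = map_tuple (teval (fun i => nth c0 x i)) (xvars P).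
  apply: eq_from_tnth => i; by rewrite tnth_map /xvars tnth_mktuple /= (tnth_nth c0).
exact: H.
Qed.

Lemma map_tcst nu P (a : (ar P).-tuple Const) : map_tuple (teval nu) (map_tuple TCst a) = a.
Proof. apply: eq_from_tnth => i; by rewrite !tnth_map. Qed.

Lemma sem_R11 (J : pI) h l :
  rule_sem J (RRule [:: h] [:: l]) <-> forall nu, lit_sem J nu l -> aval J nu h.
Proof.
split => H nu.
- move=> Hl; case: (H nu) => [l' [<-|[]]|a [[<-|[]] Ha]] //.
- move=> Hb; exists h; split; first by left. apply: H; apply: Hb; by left.
Qed.

Lemma sem_R12 (J : pI) h l1 l2 :
  rule_sem J (RRule [:: h] [:: l1; l2]) <->
  forall nu, lit_sem J nu l1 -> lit_sem J nu l2 -> aval J nu h.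
Proof.
split => H nu.
- move=> H1 H2; case: (H nu) => [l' [<-|[<-|[]]]|a [[<-|[]] Ha]] //.
- move=> Hb; exists h; split; first by left. apply: H; apply: Hb; simpl; auto.
Qed.

Lemma sem_C2 (J : pI) l1 l2 :
  rule_sem J (RConstr [:: l1; l2]) <-> forall nu, ~ (lit_sem J nu l1 /\ lit_sem J nu l2).
Proof.
split => H nu.
- case=> H1 H2; apply: (H nu) => l' [<-|[<-|[]]] //.
- move=> Hb; apply: (H nu); split; apply: Hb; simpl; auto.
Qed.

Lemma csem_R11 (I X : pI) h l :
  rule_csem I X (RRule [:: h] [:: l]) <->
  forall nu, (lit_circ I X nu l -> aval X nu h) /\ (lit_sem I nu l -> aval I nu h).
Proof.
split => H nu; split.
- move=> Hl; case: ((proj1 (H nu))) => [l' [<-|[]]|a [[<-|[]] Ha]] //.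
- move=> Hl; case: ((proj2 (H nu))) => [l' [<-|[]]|a [[<-|[]] Ha]] //.
- move=> Hb; exists h; split; first by left. apply: (proj1 (H nu)); apply: Hb; by left.
- move=> Hb; exists h; split; first by left. apply: (proj2 (H nu)); apply: Hb; by left.
Qed.

Lemma csem_R12 (I X : pI) h l1 l2 :
  rule_csem I X (RRule [:: h] [:: l1; l2]) <->
  forall nu, (lit_circ I X nu l1 -> lit_circ I X nu l2 -> aval X nu h) /\
             (lit_sem I nu l1 -> lit_sem I nu l2 -> aval I nu h).
Proof.
split => H nu; split.
- move=> H1 H2; case: ((proj1 (H nu))) => [l' [<-|[<-|[]]]|a [[<-|[]] Ha]] //.
- move=> H1 H2; case: ((proj2 (H nu))) => [l' [<-|[<-|[]]]|a [[<-|[]] Ha]] //.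
- move=> Hb; exists h; split; first by left. apply: (proj1 (H nu)); apply: Hb; simpl; auto.
- move=> Hb; exists h; split; first by left. apply: (proj2 (H nu)); apply: Hb; simpl; auto.
Qed.

Lemma csem_C2 (I X : pI) l1 l2 :
  rule_csem I X (RConstr [:: l1; l2]) <->
  forall nu, ~ (lit_circ I X nu l1 /\ lit_circ I X nu l2) /\ ~ (lit_sem I nu l1 /\ lit_sem I nu l2).
Proof.
split => H nu; split.
- case=> H1 H2; apply: (proj1 (H nu)) => l' [<-|[<-|[]]] //.
- case=> H1 H2; apply: (proj2 (H nu)) => l' [<-|[<-|[]]] //.
- move=> Hb; apply: (proj1 (H nu)); split; apply: Hb; simpl; auto.
- move=> Hb; apply: (proj2 (H nu)); split; apply: Hb; simpl; auto.
Qed.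

Definition F1 (D : instance Const ar) (J : pI) := forall P a, a \in D P -> J (P, KBase) a.
Definition F2 (IC : seq (ic Const ar)) (J : pI) := forall r, List.In r (rules2 IC) -> rule_sem J r.
Definition C2 (IC : seq (ic Const ar)) (I X : pI) := forall r, List.In r (rules2 IC) -> rule_csem I X r.
Definition F3 (J : pI) := forall P x, J (P, KBase) x \/ J (P, Kt) x -> J (P, Kst) x.
Definition F4 (J : pI) := forall P x, J (P, Kst) x -> ~ J (P, Kf) x -> J (P, Kss) x.
Definition C4 (I X : pI) := forall P x, X (P, Kst) x -> ~ X (P, Kf) x /\ ~ I (P, Kf) x -> X (P, Kss) x.
Definition F5 (J : pI) := forall P x, ~ (J (P, Kt) x /\ J (P, Kf) x).

Lemma In_enum P : List.In P (enum Pred).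
Proof. apply/In_mem; by rewrite mem_enum. Qed.

Lemma In_rules1 D r : List.In r (rules1 D) <->
  exists P a, a \in D P /\ r = RFact (@Atom Const (psym Pred) (par ar) (P, KBase) (map_tuple TCst a)).
Proof.
split.
- case/In_flatten => s [/In_map [P [_ ->]] /In_map [a [/In_mem Ha ->]]].
  by exists P, a.
- case=> P [a [Ha ->]]; apply/In_flatten; eexists; split.
  + apply/In_map; exists P; split; [exact: In_enum | reflexivity].
  + apply/In_map; exists a; split => //; exact/In_mem.
Qed.

Lemma rules1_sem (c0 : Const) D (J : pI) :
  (forall r, List.In r (rules1 D) -> rule_sem J r) <-> F1 D J.
Proof.
split.
- move=> H P a Ha; have := H _ (proj2 (In_rules1 D _) (ex_intro _ P (ex_intro _ a (conj Ha erefl)))) (fun _ => c0).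
  by rewrite /aval /= map_tcst.
- move=> H r /In_rules1 [P [a [Ha ->]]] nu; rewrite /aval /= map_tcst; exact: H.
Qed.

Lemma rules1_csem D (I X : pI) :
  (forall r, List.In r (rules1 D) -> rule_csem I X r) <->
  (forall r, List.In r (rules1 D) -> rule_sem X r).
Proof.
split => H r Hr; have := H r Hr; by case/In_rules1: Hr => P [a [_ ->]].
Qed.

Lemma In_rules3 r : List.In r rules3 <-> exists P,
  r = RRule [:: xA P Kst] [:: LPos (xA P KBase)] \/ r = RRule [:: xA P Kst] [:: LPos (xA P Kt)].
Proof.
split.
- case/In_flatten => s [/In_map [P [_ ->]] Hr]; exists P; case: Hr => [<-|[<-|[]]]; auto.
- case=> P Hr; apply/In_flatten; eexists; split.
  + apply/In_map; exists P; split; [exact: In_enum | reflexivity].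
  + case: Hr => ->; simpl; auto.
Qed.

Lemma In_rules4 r : List.In r rules4 <-> exists P,
  r = RRule [:: xA P Kss] [:: LPos (xA P Kst); LNeg (xA P Kf)].
Proof.
split.
- case/In_map => P [_ ->]; by exists P.
- case=> P ->; apply/In_map; exists P; split => //; exact: In_enum.
Qed.

Lemma In_rules5 r : List.In r rules5 <-> exists P,
  r = RConstr [:: LPos (xA P Kt); LPos (xA P Kf)].
Proof.
split.
- case/In_map => P [_ ->]; by exists P.
- case=> P ->; apply/In_map; exists P; split => //; exact: In_enum.
Qed.

Lemma rules3_sem (c0 : Const) (J : pI) :
  (forall r, List.In r rules3 -> rule_sem J r) <-> F3 J.
Proof.
split.
- move=> H P.
  have /sem_R11 H1 := H _ (proj2 (In_rules3 _) (ex_intro _ P (or_introl erefl))).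
  have /sem_R11 H2 := H _ (proj2 (In_rules3 _) (ex_intro _ P (or_intror erefl))).
  have G1 := proj1 (all_x c0 (fun x => J (P, KBase) x -> J (P, Kst) x)) H1.
  have G2 := proj1 (all_x c0 (fun x => J (P, Kt) x -> J (P, Kst) x)) H2.
  move=> x [/G1|/G2] //.
- move=> H r /In_rules3 [P [->|->]]; apply/sem_R11 => nu /= Hb; apply: H; by [left | right].
Qed.

Lemma rules3_csem (c0 : Const) (I X : pI) :
  (forall r, List.In r rules3 -> rule_csem I X r) <-> F3 X /\ F3 I.
Proof.
split.
- move=> H; split; apply/(rules3_sem c0) => r Hr; have := H r Hr;
  case/In_rules3: Hr => P [->|->] /csem_R11 H'; apply/sem_R11 => nu; case: (H' nu) => HX' HI';
  by [exact: HX' | exact: HI'].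
- move=> [HX HI] r /In_rules3 [P [->|->]]; apply/csem_R11 => nu; split => /= Hb;
  by [apply: HX; left | apply: HI; left | apply: HX; right | apply: HI; right].
Qed.

Lemma rules4_sem (c0 : Const) (J : pI) :
  (forall r, List.In r rules4 -> rule_sem J r) <-> F4 J.
Proof.
split.
- move=> H P.
  have /sem_R12 H1 := H _ (proj2 (In_rules4 _) (ex_intro _ P erefl)).
  exact: (proj1 (all_x c0 (fun x => J (P, Kst) x -> ~ J (P, Kf) x -> J (P, Kss) x)) H1).
- move=> H r /In_rules4 [P ->]; apply/sem_R12 => nu /= H1 H2; exact: H.
Qed.

Lemma rules4_csem (c0 : Const) (I X : pI) :
  (forall r, List.In r rules4 -> rule_csem I X r) <-> C4 I X /\ F4 I.
Proof.
split.
- move=> H; split.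
  + move=> P; have /csem_R12 H1 := H _ (proj2 (In_rules4 _) (ex_intro _ P erefl)).
    exact: (proj1 (all_x c0 (fun x => X (P, Kst) x -> ~ X (P, Kf) x /\ ~ I (P, Kf) x -> X (P, Kss) x))
      (fun nu => proj1 (H1 nu))).
  + move=> P; have /csem_R12 H1 := H _ (proj2 (In_rules4 _) (ex_intro _ P erefl)).
    exact: (proj1 (all_x c0 (fun x => I (P, Kst) x -> ~ I (P, Kf) x -> I (P, Kss) x))
      (fun nu => proj2 (H1 nu))).
- move=> [HX HI] r /In_rules4 [P ->]; apply/csem_R12 => nu; split => /= H1 H2;
  by [apply: HX | apply: HI].
Qed.

Lemma rules5_sem (c0 : Const) (J : pI) :
  (forall r, List.In r rules5 -> rule_sem J r) <-> F5 J.
Proof.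
split.
- move=> H P.
  have /sem_C2 H1 := H _ (proj2 (In_rules5 _) (ex_intro _ P erefl)).
  exact: (proj1 (all_x c0 (fun x => ~ (J (P, Kt) x /\ J (P, Kf) x))) H1).
- move=> H r /In_rules5 [P ->]; apply/sem_C2 => nu /=; exact: H.
Qed.

Lemma rules5_csem (c0 : Const) (I X : pI) :
  (forall r, List.In r rules5 -> rule_csem I X r) <-> F5 X /\ F5 I.
Proof.
split.
- move=> H; split; apply/(rules5_sem c0) => r Hr; have := H r Hr;
  case/In_rules5: Hr => P -> /csem_C2 H'; apply/sem_C2 => nu; case: (H' nu) => HX' HI';
  by [exact: HX' | exact: HI'].
- move=> [HX HI] r /In_rules5 [P ->]; apply/csem_C2 => nu; split => /=;
  by [apply: HX | apply: HI].
Qed.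

Definition head_ok (a : patom) := (a_sym a).2 = Kt \/ (a_sym a).2 = Kf.
Definition lit_ok (l : lit) :=
  match l with
  | LPos a => (a_sym a).2 = Kst \/ (a_sym a).2 = Kf
  | LNeg a => (a_sym a).2 = KBase
  | LBi _ => True
  end.

Lemma rules2_shape IC r : List.In r (rules2 IC) -> exists h b, r = RRule h b /\
  (forall a, List.In a h -> head_ok a) /\ (forall l, List.In l b -> lit_ok l).
Proof.
case/In_flatten => s [/In_map [c [_ ->]] /In_map [m [_ ->]]].
rewrite /rule2 /=; eexists _, _; split; first reflexivity.
split.
- move=> a /In_cat [/In_map [q [_ ->]] | /In_map [q [_ ->]]]; rewrite /head_ok /=; auto.
- move=> l /In_cat [/In_map [q [_ ->]]|/In_cat [/In_map [q [_ ->]]|/In_cat [/In_map [q [_ ->]]|/In_map [q [_ ->]]]]] /=; auto.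
Qed.

Lemma C2_of IC (I X J : pI) : F2 IC I -> F2 IC J ->
  (forall nu l, lit_ok l -> lit_circ I X nu l -> lit_sem J nu l) ->
  (forall nu a, head_ok a -> aval J nu a -> aval X nu a) -> C2 IC I X.
Proof.
move=> HI HJ Hl Hh r Hr; have := HI r Hr; have := HJ r Hr.
case: (rules2_shape Hr) => h [b [-> [Hh' Hb']]] /= HJr HIr nu; split; last exact: HIr.
move=> Hbody.
case: (HJr nu) => [l Hl'|a [Ha Haval]].
- apply: Hl; [exact: Hb' | exact: Hbody].
- exists a; split => //; exact: (Hh _ _ (Hh' a Ha) Haval).
Qed.

Lemma F2_of IC (I X J : pI) : C2 IC I X ->
  (forall nu l, lit_ok l -> lit_sem J nu l -> lit_circ I X nu l) ->
  (forall nu a, head_ok a -> aval X nu a -> aval J nu a) -> F2 IC J.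
Proof.
move=> HC Hl Hh r Hr; have := HC r Hr.
case: (rules2_shape Hr) => h [b [-> [Hh' Hb']]] /= HCr nu Hbody.
case: (proj1 (HCr nu)) => [l Hl'|a [Ha Haval]].
- apply: Hl; [exact: Hb' | exact: Hbody].
- exists a; split => //; exact: (Hh _ _ (Hh' a Ha) Haval).
Qed.

Lemma lit_cond (I X J : pI) :
  (forall P y, X (P, Kst) y -> J (P, Kst) y) ->
  (forall P y, X (P, Kf) y -> J (P, Kf) y) ->
  (forall P y, ~ X (P, KBase) y -> ~ I (P, KBase) y -> ~ J (P, KBase) y) ->
  forall nu l, lit_ok l -> lit_circ I X nu l -> lit_sem J nu l.
Proof.
move=> Hst Hf Hb nu [[[P k] args]|[[P k] args]|c] //=.
- by case=> Ek; subst k; [apply: Hst | apply: Hf].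
- by move=> Ek; subst k; case; apply: Hb.
Qed.

Lemma lit_cond' (I X J : pI) :
  (forall P y, J (P, Kst) y -> X (P, Kst) y) ->
  (forall P y, J (P, Kf) y -> X (P, Kf) y) ->
  (forall P y, ~ J (P, KBase) y -> ~ X (P, KBase) y /\ ~ I (P, KBase) y) ->
  forall nu l, lit_ok l -> lit_sem J nu l -> lit_circ I X nu l.
Proof.
move=> Hst Hf Hb nu [[[P k] args]|[[P k] args]|c] //=.
- by case=> Ek; subst k; [apply: Hst | apply: Hf].
- by move=> Ek; subst k; apply: Hb.
Qed.

Lemma head_cond (A B : pI) :
  (forall P y, A (P, Kt) y -> B (P, Kt) y) ->
  (forall P y, A (P, Kf) y -> B (P, Kf) y) ->
  forall nu a, head_ok a -> aval A nu a -> aval B nu a.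
Proof.
move=> Ht Hf nu [[P k] args]; rewrite /head_ok /aval /=.
by case=> Ek; subst k; [apply: Ht | apply: Hf].
Qed.

Lemma all_cat (P : rule -> Prop) s t :
  (forall r, List.In r (s ++ t) -> P r) <->
  (forall r, List.In r s -> P r) /\ (forall r, List.In r t -> P r).
Proof.
split.
- move=> H; split => r Hr; apply: H; apply/In_cat; auto.
- move=> [H1 H2] r /In_cat [/H1|/H2] //.
Qed.

Lemma prog_sem (c0 : Const) IC D (J : pI) :
  holds J (program_form (repair_program IC D)) <-> F1 D J /\ F2 IC J /\ F3 J /\ F4 J /\ F5 J.
Proof.
rewrite holds_prog /repair_program !all_cat (rules1_sem c0) (rules3_sem c0) (rules4_sem c0) (rules5_sem c0).
by [].
Qed.

Lemma theta_sem (c0 : Const) IC D (J : pI) :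
  holds J (Theta IC D) <-> F1 D J /\ F2 IC J /\ F3 J.
Proof.
rewrite /Theta holds_prog !all_cat (rules1_sem c0) (rules3_sem c0).
by [].
Qed.

Lemma cprog (c0 : Const) IC D (I X : pI) :
  holds (pair_interp I X) (circ (program_form (repair_program IC D))) <->
  F1 D X /\ C2 IC I X /\ (F3 X /\ F3 I) /\ (C4 I X /\ F4 I) /\ (F5 X /\ F5 I).
Proof.
rewrite holds_cprog /repair_program !all_cat rules1_csem (rules1_sem c0) (rules3_csem c0)
  (rules4_csem c0) (rules5_csem c0).
by [].
Qed.

Definition mkI (fB ft ff fst fss : forall P : Pred, (ar P).-tuple Const -> Prop) : pI :=
  fun s => match s.2 with
           | KBase => fB s.1 | Kt => ft s.1 | Kf => ff s.1 | Kst => fst s.1 | Kss => fss s.1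
           end.

Lemma main (c0 : Const) IC D (I : pI) :
  PhiSO (program_form (repair_program IC D)) I <-> circ_charac IC D I.
Proof.
split.
- case=> /(prog_sem c0) [H1 [H2 [H3 [H4 H5]]]] NoX.
  have Lower : forall X : pI, (forall s x, X s x -> I s x) -> (exists s x, I s x /\ ~ X s x) ->
      F1 D X -> C2 IC I X -> F3 X -> C4 I X -> False.
    move=> X Hle Hs HX1 HX2 HX3 HX4; apply: NoX; exists X; split; first by split.
    apply/(cprog c0); do ! split => //.
    move=> P x [Ht Hf]; apply: (H5 P x); split; exact: Hle.
  split; [split; [by move=> x; exists x | split; [by move=> c c' /eqP | ]] | ].
  + move=> P x; split; last by case=> a Ha ->; exact: H1.
    move=> HIx; apply: NNPP => Hn.
    apply: (Lower (mkI (fun P y => exists2 a, a \in D P & y = a) (fun P => I (P, Kt))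
       (fun P => I (P, Kf)) (fun P => I (P, Kst)) (fun P => I (P, Kss)))).
    * move=> [Q []] y /=; try exact: id.
      case=> a Ha ->; exact: H1.
    * by exists (P, KBase), x.
    * by move=> Q a Ha /=; exists a.
    * apply: (C2_of H2 H2).
      - by apply: lit_cond.
      - by apply: head_cond.
    * move=> Q y /= [[a Ha ->]|Ht]; apply: H3; [left; exact: H1 | by right].
    * move=> Q y /= Hst [Hf _]; exact: H4.
  split; [|split; [|split]].
  + move=> P x; split; first exact: H3.
    move=> HIx; apply: NNPP => Hn.
    apply: (Lower (mkI (fun P => I (P, KBase)) (fun P => I (P, Kt))
       (fun P => I (P, Kf)) (fun P y => I (P, KBase) y \/ I (P, Kt) y) (fun P => I (P, Kss)))).
    * move=> [Q []] y /=; try exact: id.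
      exact: H3.
    * by exists (P, Kst), x.
    * by move=> Q a Ha /=; exact: H1.
    * apply: (C2_of H2 H2).
      - apply: lit_cond => //= Q y; exact: H3.
      - by apply: head_cond.
    * by move=> Q y /=.
    * move=> Q y /= Hst [Hf _]; apply: H4 => //; exact: H3.
  + move=> P x; split; first by case; apply: H4.
    move=> HIx; apply: NNPP => Hn.
    apply: (Lower (mkI (fun P => I (P, KBase)) (fun P => I (P, Kt))
       (fun P => I (P, Kf)) (fun P => I (P, Kst)) (fun P y => I (P, Kst) y /\ ~ I (P, Kf) y))).
    * move=> [Q []] y /=; try exact: id.
      case; exact: H4.
    * by exists (P, Kss), x.
    * by move=> Q a Ha /=; exact: H1.
    * apply: (C2_of H2 H2).
      - by apply: lit_cond.
      - by apply: head_cond.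
    * by move=> Q y /=; exact: H3.
    * by move=> Q y /= Hst [Hf _].
  + exact: H5.
  split; first by apply/(theta_sem c0).
  case=> X' [Y [/(theta_sem c0) [J1 [J2 J3]] [Hle Hneq]]].
  have [s [Hms [x [HIx HXx]]]] : exists s, is_min s /\ exists x, I s x /\ ~ X' s x.
    apply: NNPP => Hn; apply: Hneq => s Hms x; split; first exact: Hle.
    move=> HIx; apply: NNPP => HX; apply: Hn; exists s; split => //; by exists x.
  apply: (Lower (mkI (fun P => I (P, KBase)) (fun P => X' (P, Kt)) (fun P => X' (P, Kf))
     (fun P y => I (P, KBase) y \/ X' (P, Kt) y)
     (fun P y => (I (P, KBase) y \/ X' (P, Kt) y) /\ ~ I (P, Kf) y))).
  + move=> [Q []] y /=.
    * exact: id.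
    * exact: (Hle (Q, Kt) erefl).
    * exact: (Hle (Q, Kf) erefl).
    * case=> [Hb|Ht]; apply: H3; [by left | right; exact: (Hle (Q, Kt) erefl)].
    * case=> [Hst Hf]; apply: H4 => //.
      case: Hst => [Hb|Ht]; apply: H3; [by left | right; exact: (Hle (Q, Kt) erefl)].
  + case: s Hms x HIx HXx => Q [] //= _ x HIx HXx.
    * by exists (Q, Kt), x.
    * by exists (Q, Kf), x.
  + by move=> Q a Ha /=; exact: H1.
  + apply: (C2_of H2 J2).
    * apply: lit_cond => Q y /=.
      - move=> H; exact: (J3 Q y H).
      - exact: id.
      - by [].
    * by apply: head_cond.
  + by move=> Q y /= [Hb|Ht]; [left | right].
  + by move=> Q y /= Hst [_ Hf].
- case=> [[_ [_ HC]] [Est [Ess [Disj [HT NoXY]]]]].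
  have HT' := HT; move/(theta_sem c0): HT' => [H1 [H2 H3]].
  have H4 : F4 I := fun P x Hs Hf => proj1 (Ess P x) (conj Hs Hf).
  split; first by apply/(prog_sem c0).
  case=> X [[Hle [s0 [x0 [HI0 HX0]]]] /(cprog c0) [X1 [X2 [[X3 _] [[X4 _] _]]]]].
  have Hb : forall P y, X (P, KBase) y <-> I (P, KBase) y.
    move=> P y; split; first exact: Hle.
    move/HC => [a Ha ->]; exact: X1.
  apply: NoXY; exists X, X; split; [|split].
  + apply/(theta_sem c0); split; [|split].
    * move=> P a Ha /=; exact: H1.
    * apply: (F2_of X2).
      - apply: lit_cond' => Q y /=; try exact: id.
        move=> Hn; split => // HXb; apply: Hn; exact: Hle.
      - by apply: head_cond.
    * move=> Q y /= [Hib|Ht]; apply: X3; [left; exact/Hb | by right].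
  + move=> s _ x; exact: Hle.
  + move=> Heq; apply: HX0.
    have HtI : forall Q y, I (Q, Kt) y -> X (Q, Kt) y.
      move=> Q y; exact: (proj2 (Heq (Q, Kt) erefl y)).
    have HstI : forall Q y, I (Q, Kst) y -> X (Q, Kst) y.
      move=> Q y /Est [Hib|Ht]; apply: X3; [left; exact/Hb | right; exact: HtI].
    case: s0 x0 HI0 => Q [] x0 HI0.
    * exact/Hb.
    * exact: HtI.
    * exact: (proj2 (Heq (Q, Kf) erefl x0)).
    * exact: HstI.
    * move/Ess: HI0 => [Hst Hnf]; apply: X4; first exact: HstI.
      split => // HXf; apply: Hnf; exact: Hle.
Qed.

End Rep.

Theorem proposition2 (Const : finType) (Pred : finType) (ar : Pred -> nat)
    (IC : seq (ic Const ar)) (D : instance Const ar)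
    (hC : 0 < #|Const|) (I : pinterp Const ar) :
  PhiSO (program_form (repair_program IC D)) I <-> circ_charac IC D I.
Proof.
case/card_gt0P: hC => c0 _.
exact: main c0 IC D I.
Qed.
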